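(* Under Assumptions 1-MP, 2-MP(a) and 3-MP, $$\frac1{\mathcal{T}}\sum_{t=1}^{\mathcal{T}}\mathbb{E}[\ddot W_t^2]=\sum_{g\in\mathcal{G}}\tilde w^{g,within}(g)+\sum_{g\in\mathcal{G}}\sum_{k\in\mathcal{G},k>g}\big\{\tilde w^{g,post}(g,k)+\tilde w^{k,post}(g,k)+\tilde w^{long}(g,k)\big\}.$$
   Context: Multi-period setup: periods $t=1,\dots,\mathcal{T}$; timing group $G\in\mathcal{G}\subseteq\{2,\dots,\mathcal{T}+1\}$ ($G=\mathcal{T}+1$: never treated), dose $D\ge0$ with $D=0$ exactly for never-treated units; $W_t:=D\mathbf{1}\{t\ge G\}$. 1-MP: i.i.d. sampling of $(Y_1,\dots,Y_{\mathcal{T}},D,G)$, $D$ square-integrable. 2-MP(a): support of $D$ is $\{0\}\cup\mathcal{D}_+$, $\mathcal{D}_+\subset(0,\infty)$, $\mathbb{P}(D=0)>0$. 3-MP: no anticipation and staggered adoption ($W_1=0$, $W_{t-1}=d\Rightarrow W_t=d$). $\bar W_i:=\frac1{\mathcal{T}}\sum_tW_{it}$, $\ddot W_{it}:=(W_{it}-\bar W_i)-(\mathbb{E}[W_t]-\frac1{\mathcal{T}}\sum_s\mathbb{E}[W_s])$. $p_g:=\mathbb{P}(G=g)$, $\bar G_g:=(\mathcal{T}-g+1)/\mathcal{T}$. $\tilde w^{g,within}(g):=\mathrm{var}(D\mid G=g)(1-\bar G_g)\bar G_g\,p_g$; $\tilde w^{g,post}(g,k):=\mathbb{E}[D\mid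 G=g]^2(1-\bar G_g)(\bar G_g-\bar G_k)p_gp_k$; $\tilde w^{k,post}(g,k):=\mathbb{E}[D\mid G=k]^2\bar G_k(\bar G_g-\bar G_k)p_gp_k$; $\tilde w^{long}(g,k):=(\mathbb{E}[D\mid G=g]-\mathbb{E}[D\mid G=k])^2\bar G_k(1-\bar G_g)p_gp_k$. *)

(* Defs.v *)
From HB Require Import structures.
From mathcomp Require Import all_boot all_order all_algebra.
From mathcomp Require Import all_classical all_reals all_analysis.
Set Implicit Arguments. Unset Strict Implicit. Unset Printing Implicit Defensive.
Import Order.TTheory GRing.Theory Num.Theory.
Local Open Scope ring_scope.

Section defs.
Context {d : measure_display} {Omega : measurableType d} {R : realType}.
Variable (P : probability Omega R).
Variable (TT : nat) (G : Omega -> nat) (D : Omega -> R).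

(* real-valued expectation (finite under square integrability) *)
Definition Er (X : Omega -> R) : R := fine ('E_P[X])%E.

Definition Wt (t : nat) : Omega -> R := fun w => if (G w <= t)%N then D w else 0.

Definition Wbar : Omega -> R := fun w => TT%:R^-1 * \sum_(1 <= t < TT.+1) Wt t w.

Definition Wdd (t : nat) : Omega -> R := fun w =>
  (Wt t w - Wbar w) - (Er (Wt t) - TT%:R^-1 * \sum_(1 <= s < TT.+1) Er (Wt s)).

Definition pg (g : nat) : R := fine (P [set w | G w = g]%classic).

Definition condE (X : Omega -> R) (g : nat) : R :=
  Er (fun w => X w * (G w == g)%:R) / pg g.

Definition EDg (g : nat) : R := condE D g.
Definition varDg (g : nat) : R := condE (fun w => (D w - EDg g) ^+ 2) g.

Definition Gbar (g : nat) : R := (TT%:R - g%:R + 1) / TT%:R.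

Definition w_within (g : nat) : R :=
  varDg g * (1 - Gbar g) * Gbar g * pg g.
Definition w_gpost (g k : nat) : R :=
  EDg g ^+ 2 * (1 - Gbar g) * (Gbar g - Gbar k) * pg g * pg k.
Definition w_kpost (g k : nat) : R :=
  EDg k ^+ 2 * Gbar k * (Gbar g - Gbar k) * pg g * pg k.
Definition w_long (g k : nat) : R :=
  (EDg g - EDg k) ^+ 2 * Gbar k * (1 - Gbar g) * pg g * pg k.

End defs.

(* Main.v *)
Require Import Defs.
From HB Require Import structures.
From mathcomp Require Import all_boot all_order all_algebra.
From mathcomp Require Import all_classical all_reals all_analysis.
From mathcomp Require Import ring lra zify.
Import Order.TTheory GRing.Theory Num.Theory.
Set Implicit Arguments. Unset Strict Implicit.
Local Open Scope ring_scope.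

Lemma pairsum (R : realType) (a n : nat) (Q : pred nat) (f : nat -> nat -> R) :
  \sum_(a <= i < n | Q i) \sum_(a <= j < n | Q j) f i j =
  \sum_(a <= i < n | Q i) \sum_(a <= j < n | Q j && (i < j)%N) (f i j + f j i)
  + \sum_(a <= i < n | Q i) f i i.
Proof.
have E1 : forall i, (a <= i < n)%N -> Q i -> \sum_(a <= j < n | Q j) f i j =
   \sum_(a <= j < n | Q j && (i < j)%N) f i j + \sum_(a <= j < n | Q j) (if (j < i)%N then f i j else 0) + f i i.
  move=> i hi Qi; rewrite (bigID (fun j => (i < j)%N)) /= -addrA; congr (_ + _).
  rewrite big_mkcond (bigD1_seq i) ?mem_index_iota ?iota_uniq //= Qi ltnn /= addrC; congr (_ + _).
  rewrite [LHS]big_mkcond [RHS]big_mkcond /=.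
  apply: eq_bigr => j _; case: (Q j) => //=; case: (ltngtP i j) => //= h.
rewrite (_ : \sum_(a <= i < n | Q i) \sum_(a <= j < n | Q j) f i j =
  \sum_(a <= i < n | Q i) (\sum_(a <= j < n | Q j && (i < j)%N) f i j +
    \sum_(a <= j < n | Q j) (if (j < i)%N then f i j else 0) + f i i)); last first.
  rewrite big_mkcond [RHS]big_mkcond; apply: eq_big_nat => i hi; case: ifP => // Qi; exact: E1.
rewrite !big_split /=; congr (_ + _).
under [X in _ = X]eq_bigr do rewrite big_split /=.
rewrite big_split /=; congr (_ + _).
rewrite exchange_big /=; apply: eq_bigr => i _; rewrite big_mkcondr; done.
Qed.

Lemma Er_add d (Omega : measurableType d) (R : realType) (P : probability Omega R)
  (X Y : Omega -> R) : X \in Lfun P 1 -> Y \in Lfun P 1 ->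
  Er P (fun w => X w + Y w) = Er P X + Er P Y.
Proof.
move=> hX hY; rewrite /Er (expectationD hX hY) fineD //; exact: expectation_fin_num.
Qed.

Lemma Er_scale d (Omega : measurableType d) (R : realType) (P : probability Omega R)
  (k : R) (X : Omega -> R) : X \in Lfun P 1 ->
  Er P (fun w => k * X w) = k * Er P X.
Proof.
move=> hX; rewrite /Er (_ : (fun w => k * X w) = k \o* X); last first.
  by apply/funext => w /=; rewrite mulrC.
rewrite (expectationZl _ hX).
have := expectation_fin_num hX; case: ('E_P[X])%E => //.
Qed.

Lemma Lf_add d (Omega : measurableType d) (R : realType) (P : probability Omega R)
  (X Y : Omega -> R) : X \in Lfun P 1 -> Y \in Lfun P 1 ->
  (fun w => X w + Y w) \in Lfun P 1.
Proof. move=> hX hY; exact: rpredD. Qed.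

Lemma Lf_scale d (Omega : measurableType d) (R : realType) (P : probability Omega R)
  (k : R) (X : Omega -> R) : X \in Lfun P 1 -> (fun w => k * X w) \in Lfun P 1.
Proof. move=> hX; rewrite (_ : (fun w => k * X w) = k \o* X); last first.
  by apply/funext => w /=; rewrite mulrC.
exact: (Lfun_scale k (r:=1)). Qed.

Lemma mnat (R : realType) (f : nat -> R) : measurable_fun setT f.
Proof. by []. Qed.

Lemma Lf_X d (Omega : measurableType d) (R : realType) (P : probability Omega R)
  (G : Omega -> nat) (D : Omega -> R)
  (hGmeas : measurable_fun setT G)
  (hDmeas : measurable_fun setT D)
  (hD2 : P.-integrable setT (fun w => (D w ^+ 2)%:E))
  (hDnn : forall w, 0 <= D w) (j : nat) (hj : (j <= 2)%N) (g : nat) :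
  (fun w => D w ^+ j * (G w == g)%:R) \in Lfun P 1.
Proof.
apply/Lfun1_integrable.
have hi : P.-integrable setT (fun w => (1 + D w ^+ 2)%:E).
  have h1 : P.-integrable setT (fun w => (1%R)%:E) by exact: finite_measure_integrable_cst.
  have := integrableD measurableT h1 hD2.
  apply: eq_integrable => //.
apply: (le_integrable measurableT _ _ hi); last first.
  move=> w _ /=; rewrite lee_fin.
  have h0 := hDnn w.
  rewrite (ger0_norm (x := 1 + D w ^+ 2)); last by rewrite addr_ge0 // sqr_ge0.
  case: (G w == g); rewrite ?mulr1 ?mulr0 ?normr0; last by rewrite addr_ge0 // sqr_ge0.
  rewrite ger0_norm ?exprn_ge0 //.
  move: hj; case: j => [|[|[|]]] // _; rewrite ?expr0 ?expr1.
  - by rewrite lerDl sqr_ge0.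
  - nra.
  - by rewrite lerDr.
apply/measurable_realfun.measurable_EFinP; apply: measurable_realfun.measurable_funM.
  exact: measurable_realfun.measurable_funX.
apply: (@measurableT_comp _ _ _ _ _ _ (fun n : nat => ((n == g)%:R : R)) _ G) => //.
Qed.

Lemma Er_sum d (Omega : measurableType d) (R : realType) (P : probability Omega R)
  (s : seq nat) (Q : pred nat) (F : nat -> Omega -> R) :
  (forall i, F i \in Lfun P 1) ->
  (fun w => \sum_(i <- s | Q i) F i w) \in Lfun P 1 /\
  Er P (fun w => \sum_(i <- s | Q i) F i w) = \sum_(i <- s | Q i) Er P (F i).
Proof.
move=> hF; elim: s => [|i s [IH1 IH2]].
  rewrite big_nil; under eq_fun do rewrite big_nil.
  split; first exact: Lfun_cst.
  by rewrite /Er (expectation_cst P 0).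
rewrite big_cons; under eq_fun do rewrite big_cons.
case: (Q i); last by split.
split; first exact: Lf_add.
by rewrite Er_add // IH2.
Qed.

Lemma sum_ind (R : realType) (TT : nat) (Gs : {pred nat})
  (hGs : forall g, g \in Gs -> (2 <= g <= TT.+1)%N) (x : nat) (F : nat -> R) :
  x \in Gs -> \sum_(2 <= g < TT.+2 | g \in Gs) F g * (x == g)%:R = F x.
Proof.
move=> hx; rewrite big_mkcond (bigD1_seq x) ?mem_index_iota ?iota_uniq //=; last first.
  by have := hGs x hx; lia.
rewrite hx eqxx mulr1 big1 ?addr0 // => i /negbTE; rewrite eq_sym => ->.
by case: (i \in Gs); rewrite ?mulr0.
Qed.

Lemma KL d (Omega : measurableType d) (R : realType)
  (P : probability Omega R) (TT : nat) (Gs : {pred nat})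
  (G : Omega -> nat) (D : Omega -> R)
  (hGs : forall g, g \in Gs -> (2 <= g <= TT.+1)%N)
  (hGval : forall w, G w \in Gs)
  (hGmeas : measurable_fun setT G)
  (hDmeas : measurable_fun setT D)
  (hD2 : P.-integrable setT (fun w => (D w ^+ 2)%:E))
  (hDnn : forall w, 0 <= D w) (a b c : nat -> R) :
  Er P (fun w => a (G w) * D w ^+ 2 + b (G w) * D w + c (G w)) =
  \sum_(2 <= g < TT.+2 | g \in Gs) (a g * Er P (fun w => D w ^+ 2 * (G w == g)%:R)
     + b g * Er P (fun w => D w ^+ 1 * (G w == g)%:R)
     + c g * Er P (fun w => D w ^+ 0 * (G w == g)%:R)).
Proof.
have LX := Lf_X hGmeas hDmeas hD2 hDnn.
set F := fun g w => a g * (D w ^+ 2 * (G w == g)%:R) + b g * (D w ^+ 1 * (G w == g)%:R)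
   + c g * (D w ^+ 0 * (G w == g)%:R).
have hF : forall g, F g \in Lfun P 1.
  move=> g; rewrite /F; apply: Lf_add; [apply: Lf_add|]; apply: Lf_scale; by apply: LX.
rewrite (_ : (fun w => _) = (fun w => \sum_(2 <= g < TT.+2 | g \in Gs) F g w)); last first.
  apply/funext => w; rewrite /F.
  rewrite -(sum_ind hGs (fun g => a g * D w ^+ 2 + b g * D w + c g) (hGval w)).
  apply: eq_bigr => g _; rewrite eq_sym expr0 expr1; ring.
rewrite (Er_sum _ _ hF).2; apply: eq_bigr => g _.
have L2 : (fun w => D w ^+ 2 * (G w == g)%:R) \in Lfun P 1 by apply: LX.
have L1 : (fun w => D w ^+ 1 * (G w == g)%:R) \in Lfun P 1 by apply: LX.
have L0 : (fun w => D w ^+ 0 * (G w == g)%:R) \in Lfun P 1 by apply: LX.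
rewrite /F Er_add; last 2 first.
- by apply: Lf_add; apply: Lf_scale.
- by apply: Lf_scale.
rewrite Er_add; try apply: Lf_scale => //.
by rewrite (Er_scale (a g) L2) (Er_scale (b g) L1) (Er_scale (c g) L0).
Qed.

Lemma pg_m0 d (Omega : measurableType d) (R : realType)
  (P : probability Omega R) (G : Omega -> nat) (D : Omega -> R)
  (hGmeas : measurable_fun setT G) (g : nat) :
  pg P G g = Er P (fun w => D w ^+ 0 * (G w == g)%:R).
Proof.
have mA : measurable [set w | G w = g]%classic.
  by have := hGmeas measurableT [set g]%classic I; rewrite setTI.
rewrite /pg /Er (_ : (fun w => _) = \1_[set w | G w = g]%classic).
  by rewrite expectation_indic.
apply/funext => w; rewrite indicE expr0 mul1r.
case: eqP => h; first by rewrite mem_set.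
by rewrite memNset.
Qed.

Lemma null_m d (Omega : measurableType d) (R : realType)
  (P : probability Omega R) (G : Omega -> nat) (D : Omega -> R)
  (hGmeas : measurable_fun setT G) (hDmeas : measurable_fun setT D) (g j : nat) :
  pg P G g = 0 -> Er P (fun w => D w ^+ j * (G w == g)%:R) = 0.
Proof.
move=> h0.
have mA : measurable [set w | G w = g]%classic.
  by have := hGmeas measurableT [set g]%classic I; rewrite setTI.
have PA : P [set w | G w = g]%classic = 0%E.
  by rewrite -(@fineK _ (P _)) ?fin_num_measure //; move: h0; rewrite /pg => ->.
rewrite /Er unlock.
rewrite (_ : (fun w => _) = ((fun x => (D x ^+ j)%:E) \_ [set w | G w = g]%classic)).
  rewrite -integral_mkcond null_set_integral //.
  apply/measurable_realfun.measurable_EFinP.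
  apply: measurable_realfun.measurable_funX.
  exact: measurable_funS hDmeas.
apply/funext => w /=; rewrite /patch.
case: eqP => h; first by rewrite mem_set // mulr1.
by rewrite memNset // mulr0.
Qed.

Lemma final_alg (R : realType) (TT : nat) (Gs : {pred nat}) (p mu q v Gb : nat -> R)
  (Sp : \sum_(2 <= g < TT.+2 | g \in Gs) p g = 1)
  (hv : forall g, g \in Gs -> v g * p g = q g - mu g ^+ 2 * p g) :
  \sum_(2 <= g < TT.+2 | g \in Gs) q g * (Gb g * (1 - Gb g))
  - \sum_(2 <= g < TT.+2 | g \in Gs) \sum_(2 <= k < TT.+2 | k \in Gs)
      (mu g * p g) * (mu k * p k) * (Gb (maxn g k) - Gb g * Gb k)
  = \sum_(2 <= g < TT.+2 | g \in Gs) v g * (1 - Gb g) * Gb g * p g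
    + \sum_(2 <= g < TT.+2 | g \in Gs) \sum_(2 <= k < TT.+2 | (k \in Gs) && (g < k)%N)
        (mu g ^+ 2 * (1 - Gb g) * (Gb g - Gb k) * p g * p k
         + mu k ^+ 2 * Gb k * (Gb g - Gb k) * p g * p k
         + (mu g - mu k) ^+ 2 * Gb k * (1 - Gb g) * p g * p k).
Proof.
pose f g k := mu g ^+ 2 * p g * p k * (Gb g * (1 - Gb g))
   - (mu g * p g) * (mu k * p k) * (Gb (maxn g k) - Gb g * Gb k).
have E1 : \sum_(2 <= g < TT.+2 | g \in Gs) \sum_(2 <= k < TT.+2 | k \in Gs) f g k =
  \sum_(2 <= g < TT.+2 | g \in Gs) mu g ^+ 2 * p g * (Gb g * (1 - Gb g))
  - \sum_(2 <= g < TT.+2 | g \in Gs) \sum_(2 <= k < TT.+2 | k \in Gs)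
      (mu g * p g) * (mu k * p k) * (Gb (maxn g k) - Gb g * Gb k).
  rewrite -sumrB; apply: eq_bigr => g _; rewrite /f sumrB; congr (_ - _).
  rewrite (eq_bigr (fun k => (mu g ^+ 2 * p g * (Gb g * (1 - Gb g))) * p k)) => [|k _]; last by ring.
  by rewrite -mulr_sumr Sp mulr1.
have E2 : \sum_(2 <= g < TT.+2 | g \in Gs) \sum_(2 <= k < TT.+2 | k \in Gs) f g k =
    \sum_(2 <= g < TT.+2 | g \in Gs) \sum_(2 <= k < TT.+2 | (k \in Gs) && (g < k)%N)
        (mu g ^+ 2 * (1 - Gb g) * (Gb g - Gb k) * p g * p k
         + mu k ^+ 2 * Gb k * (Gb g - Gb k) * p g * p k
         + (mu g - mu k) ^+ 2 * Gb k * (1 - Gb g) * p g * p k).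
  rewrite pairsum [X in _ + X]big1 ?addr0; last by move=> g _; rewrite /f maxnn; ring.
  apply: eq_bigr => g _; apply: eq_bigr => k /andP[_ hgk].
  rewrite /f (maxn_idPr (ltnW hgk)) (maxn_idPl (ltnW hgk)); ring.
rewrite -E2 E1 (_ : \sum_(2 <= g < TT.+2 | g \in Gs) v g * (1 - Gb g) * Gb g * p g =
  \sum_(2 <= g < TT.+2 | g \in Gs) q g * (Gb g * (1 - Gb g)) -
  \sum_(2 <= g < TT.+2 | g \in Gs) mu g ^+ 2 * p g * (Gb g * (1 - Gb g))); first by ring.
rewrite -sumrB; apply: eq_bigr => g Gg.
rewrite (_ : v g * (1 - Gb g) * Gb g * p g = (v g * p g) * (Gb g * (1 - Gb g))); last by ring.
rewrite hv //; ring.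
Qed.

Lemma cnt (R : realType) (n g : nat) : (1 <= g)%N ->
  \sum_(1 <= t < n.+1) ((g <= t)%:R : R) = (n.+1 - g)%:R.
Proof.
move=> g1; elim: n => [|n IH]; first by rewrite big_geq //; move: g1; case: g => [|[]].
rewrite big_nat_recr //= IH -natrD; congr (_%:R).
case: (leqP g n.+1) => h /=; lia.
Qed.

Lemma hGb (R : realType) (TT g : nat) : (1 <= TT)%N -> (1 <= g <= TT.+1)%N ->
  TT%:R^-1 * \sum_(1 <= t < TT.+1) ((g <= t)%:R : R) = Gbar TT g.
Proof.
move=> hT /andP[h1 h2]; rewrite cnt // /Gbar natrB // -natr1.
have hT0 : (TT%:R : R) != 0 by rewrite pnatr_eq0 -lt0n.
by field.
Qed.

Definition cc (R : realType) (TT g t : nat) : R := (g <= t)%:R - Gbar TT g.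

Lemma Kt (R : realType) (TT g k : nat) : (1 <= TT)%N -> (1 <= g <= TT.+1)%N ->
  (1 <= k <= TT.+1)%N ->
  TT%:R^-1 * \sum_(1 <= t < TT.+1) (cc R TT g t * cc R TT k t) =
  Gbar TT (maxn g k) - Gbar TT g * Gbar TT k.
Proof.
move=> hT hg hk.
have hT0 : (TT%:R : R) != 0 by rewrite pnatr_eq0 -lt0n.
have hm : (1 <= maxn g k <= TT.+1)%N by rewrite geq_max leq_max; lia.
have Sg := hGb R hT hg; have Sk := hGb R hT hk; have Sm := hGb R hT hm.
rewrite (eq_bigr (fun t => (maxn g k <= t)%:R - Gbar TT k * (g <= t)%:R
   - Gbar TT g * (k <= t)%:R + Gbar TT g * Gbar TT k)); last first.
  move=> t _; rewrite /cc geq_max; case: (g <= t)%N; case: (k <= t)%N => /=; ring.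
have E : forall x, (1 <= x <= TT.+1)%N -> \sum_(1 <= t < TT.+1) ((x <= t)%:R : R) = TT%:R * Gbar TT x.
  by move=> x hx; rewrite -(hGb R hT hx) mulrA divff // mul1r.
rewrite big_split /= !sumrB -!mulr_sumr !E //.
rewrite sumr_const_nat subSS subn0.
rewrite -[_^-1 *+ TT]mulr_natr /Gbar.
by field.
Qed.

Lemma avg_sq (R : realType) (T0 : R) (a b m n : nat) (Q : pred nat) (x : nat -> R)
  (c : nat -> nat -> R) :
  T0 * \sum_(a <= t < b) (\sum_(m <= g < n | Q g) c g t * x g) ^+ 2 =
  \sum_(m <= g < n | Q g) \sum_(m <= k < n | Q k)
     x g * x k * (T0 * \sum_(a <= t < b) c g t * c k t).
Proof.
transitivity (\sum_(a <= t < b) \sum_(m <= g < n | Q g) \sum_(m <= k < n | Q k)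
   x g * x k * (T0 * (c g t * c k t))).
  rewrite mulr_sumr; apply: eq_bigr => t _; rewrite expr2 mulr_suml mulr_sumr.
  apply: eq_bigr => g _; rewrite mulr_sumr mulr_sumr; apply: eq_bigr => k _; ring.
rewrite exchange_big; apply: eq_bigr => g _; rewrite exchange_big; apply: eq_bigr => k _.
by rewrite mulr_sumr mulr_sumr.
Qed.

Lemma avg_lin (R : realType) (T0 : R) (a b m n : nat) (Q : pred nat) (x : nat -> R)
  (c : nat -> nat -> R) :
  T0 * \sum_(a <= t < b) \sum_(m <= g < n | Q g) c g t * x g =
  \sum_(m <= g < n | Q g) x g * (T0 * \sum_(a <= t < b) c g t).
Proof.
transitivity (\sum_(a <= t < b) \sum_(m <= g < n | Q g) x g * (T0 * c g t)).
  rewrite mulr_sumr; apply: eq_bigr => t _; rewrite mulr_sumr.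
  by apply: eq_bigr => g _; ring.
rewrite exchange_big; apply: eq_bigr => g _.
by rewrite mulr_sumr mulr_sumr.
Qed.

Unset Implicit Arguments.

Theorem lemma6 (d : measure_display) (Omega : measurableType d) (R : realType)
  (P : probability Omega R) (TT : nat) (Gs : {pred nat})
  (G : Omega -> nat) (D : Omega -> R)
  (hT : (1 <= TT)%N)
  (hGs : forall g, g \in Gs -> (2 <= g <= TT.+1)%N)
  (hGval : forall w, G w \in Gs)
  (hGmeas : measurable_fun setT G)
  (hDmeas : measurable_fun setT D)
  (hD2 : P.-integrable setT (fun w => (D w ^+ 2)%:E))
  (hDnn : forall w, 0 <= D w)
  (hD0 : forall w, D w = 0 <-> G w = TT.+1)
  (hPD0 : (0 < P [set w | D w = 0%R]%classic)%E) :
  TT%:R^-1 * \sum_(1 <= t < TT.+1) Er P (fun w => Wdd P TT G D t w ^+ 2)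
  = \sum_(2 <= g < TT.+2 | g \in Gs) w_within P TT G D g
    + \sum_(2 <= g < TT.+2 | g \in Gs) \sum_(2 <= k < TT.+2 | (k \in Gs) && (g < k)%N)
        (w_gpost P TT G D g k + w_kpost P TT G D g k + w_long P TT G D g k).
Proof.
have hT0 : (TT%:R : R) != 0 by rewrite pnatr_eq0 -lt0n.
have hGr : forall g, g \in Gs -> (1 <= g <= TT.+1)%N by move=> g /hGs; lia.
have KL0 := KL hGs hGval hGmeas hDmeas hD2 hDnn.
have Sp : \sum_(2 <= g < TT.+2 | g \in Gs) Er P (fun w => D w ^+ 0 * (G w == g)%:R) = 1.
  have := KL0 (fun _ => 0) (fun _ => 0) (fun _ => 1).
  rewrite (_ : (fun w => _) = cst 1); last by apply/funext => w; rewrite !mul0r !add0r.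
  have e1 : Er P (cst 1) = 1 by rewrite /Er expectation_cst.
  rewrite e1 => E; rewrite [RHS]E.
  by apply: eq_bigr => g _; rewrite !mul0r !add0r mul1r.
have hWt : forall t w, Wt G D t w = D w * (G w <= t)%:R.
  by move=> t w; rewrite /Wt; case: ifP; rewrite ?mulr1 ?mulr0.
have hWbar : forall w, Wbar TT G D w = D w * Gbar TT (G w).
  move=> w; rewrite /Wbar (eq_bigr _ (fun t _ => hWt t w)) -mulr_sumr mulrCA hGb //.
  exact: hGr.
have hEW : forall t, Er P (Wt G D t) = \sum_(2 <= g < TT.+2 | g \in Gs)
    (g <= t)%:R * Er P (fun w => D w ^+ 1 * (G w == g)%:R).
  move=> t; have := KL0 (fun _ => 0) (fun g => (g <= t)%:R) (fun _ => 0).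
  rewrite (_ : (fun w => _) = Wt G D t); last by apply/funext => w; rewrite hWt; ring.
  move=> ->; apply: eq_bigr => g _; ring.
have he : forall t, Er P (Wt G D t) - TT%:R^-1 * \sum_(1 <= s < TT.+1) Er P (Wt G D s)
   = \sum_(2 <= g < TT.+2 | g \in Gs) cc R TT g t * Er P (fun w => D w ^+ 1 * (G w == g)%:R).
  move=> t; rewrite hEW (eq_bigr _ (fun s _ => hEW s)).
  rewrite (@avg_lin _ _ _ _ _ _ _ _ (fun g s => ((g <= s)%:R : R))) -sumrB.
  by apply: eq_bigr => g Gg; rewrite hGb ?hGr // /cc; ring.
have hWdd : forall t w, Wdd P TT G D t w = D w * cc R TT (G w) t
   - \sum_(2 <= g < TT.+2 | g \in Gs) cc R TT g t * Er P (fun w => D w ^+ 1 * (G w == g)%:R).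
  by move=> t w; rewrite /Wdd he hWt hWbar /cc; ring.
have hW2 : forall t, Er P (fun w => Wdd P TT G D t w ^+ 2) =
   \sum_(2 <= g < TT.+2 | g \in Gs) cc R TT g t ^+ 2 * Er P (fun w => D w ^+ 2 * (G w == g)%:R)
   - (\sum_(2 <= g < TT.+2 | g \in Gs) cc R TT g t * Er P (fun w => D w ^+ 1 * (G w == g)%:R)) ^+ 2.
  move=> t.
  set e := \sum_(2 <= g < TT.+2 | g \in Gs) cc R TT g t * Er P (fun w => D w ^+ 1 * (G w == g)%:R).
  have := KL0 (fun g => cc R TT g t ^+ 2) (fun g => -2 * e * cc R TT g t) (fun _ => e ^+ 2).
  rewrite (_ : (fun w => _) = (fun w => Wdd P TT G D t w ^+ 2)); last first.
    by apply/funext => w; rewrite hWdd -/e; ring.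
  move=> ->; rewrite !big_split /=.
  rewrite [X in _ + X + _](eq_bigr (fun g => -2 * e * (cc R TT g t * Er P (fun w => D w ^+ 1 * (G w == g)%:R))))
    => [|g _]; last by ring.
  by rewrite -mulr_sumr -/e -mulr_sumr Sp; ring.
have hm1 : forall g, Er P (fun w => D w ^+ 1 * (G w == g)%:R) = EDg P G D g * pg P G g.
  move=> g; case: (eqVneq (pg P G g) 0) => h0.
    by rewrite h0 mulr0; apply: null_m.
  rewrite /EDg /condE divfK //.
have hv : forall g, g \in Gs -> varDg P G D g * pg P G g =
    Er P (fun w => D w ^+ 2 * (G w == g)%:R) - EDg P G D g ^+ 2 * pg P G g.
  move=> g Gg; set mu := EDg P G D g.
  have := KL0 (fun h => (h == g)%:R) (fun h => -2 * mu * (h == g)%:R)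
    (fun h => mu ^+ 2 * (h == g)%:R).
  rewrite (_ : (fun w => _) = fun w => (D w - mu) ^+ 2 * (G w == g)%:R); last first.
    by apply/funext => w; ring.
  move=> E.
  case: (eqVneq (pg P G g) 0) => h0.
    by rewrite h0 !mulr0 subr0 (null_m hGmeas hDmeas).
  rewrite /varDg /condE -/mu E divfK //.
  rewrite (eq_bigr (fun h => (Er P (fun w => D w ^+ 2 * (G w == h)%:R)
     - 2 * mu * Er P (fun w => D w ^+ 1 * (G w == h)%:R)
     + mu ^+ 2 * Er P (fun w => D w ^+ 0 * (G w == h)%:R)) * (g == h)%:R)) => [|h _]; last first.
    by rewrite eq_sym; ring.
  rewrite sum_ind // -(@pg_m0 _ _ _ P G D hGmeas g) hm1 -/mu; ring.
have Sp' : \sum_(2 <= g < TT.+2 | g \in Gs) pg P G g = 1.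
  by rewrite -Sp; apply: eq_bigr => g _; apply: (@pg_m0 _ _ _ P G D hGmeas g).
rewrite /w_within /w_gpost /w_kpost /w_long.
rewrite -(@final_alg R TT Gs (pg P G) (EDg P G D)
   (fun g => Er P (fun w => D w ^+ 2 * (G w == g)%:R)) (varDg P G D) (Gbar TT) Sp' hv).
rewrite (eq_bigr _ (fun t _ => hW2 t)) sumrB mulrBr.
rewrite (@avg_lin _ _ _ _ _ _ _ _ (fun g t => cc R TT g t ^+ 2)) avg_sq.
congr (_ - _).
  apply: eq_bigr => g Gg; congr (_ * _).
  rewrite (eq_bigr (fun t => cc R TT g t * cc R TT g t)) => [|t _]; last by rewrite expr2.
  by rewrite Kt ?hGr // maxnn; ring.
apply: eq_bigr => g Gg; apply: eq_bigr => k Gk.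
by rewrite Kt ?hGr // !hm1.
Qed.
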